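(* Let $(k_n)$ be a sequence of positive integers with $k_n\ll n$ (i.e. $k_n/n\to0$). Let $G_n$ be the Erdős–Rényi random graph on $\mathcal C^0_n$ with any edge probability $p_n\in(0,1)$, $R_n$ its associated reaction network, and let $A_n$ be the event that every reaction vector $y'-y$ of $R_n$ has exactly $4$ non-zero components. Then for all sufficiently large $n$, \[ \mathbb P(A_n\mid R_n\text{ is }k_n\text{-paired})\ge 1-\frac{21k_n}{n}. \]
   Context: Let $e_i$ be the $i$-th standard basis vector of $\mathbb Z^n$ and $\mathcal C^0_n=\{0\}\cup\{e_i:1\le i\le n\}\cup\{e_i+e_j:1\le i\le j\le n\}$, so $N_n=|\mathcal C^0_n|=\frac{n^2+3n+2}{2}$. $G_n$ is the Erdős–Rényi random graph on vertex set $\mathcal C^0_n$ in which each of the $\binom{N_n}{2}$ possible undirected edges is present independently with probability $p_n$. The associated reaction network $R_n$ has species $S_1,\dots,S_n$, complex set equal to the set of vertices of $G_n$ of positive degree, and for each edge $\{y,y'\}$ of $G_n$ the two reactions $y\to y'$ and $y'\to y$. A reaction network is paired if each connected component of its graph contains exactly two complexes, and $i$-paired if it is paired with exactly $i$ connected components; thus $R_n$ is $k$-paired exactly when $G_n$ is a matching with $k$ edges (plus isolated vertices). Conditioned on $R_n$ being $k_n$-paired, $G_n$ is uniformly distributed over all such matchings. *)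

(* Defs.v *)
From HB Require Import structures.
From mathcomp Require Import all_boot all_order all_algebra.
Set Implicit Arguments. Unset Strict Implicit. Unset Printing Implicit Defensive.
Import Order.TTheory GRing.Theory Num.Theory.

(* Candidate complexes: vectors in {0,1,2}^n, viewed as elements of Z^n
   (entries of every element of C^0_n lie in {0,1,2}). *)
Notation vert n := {ffun 'I_n -> 'I_3}.

Definition isC0 n (v : vert n) : bool :=
  [|| [forall l, (v l : nat) == 0%N],
      [exists i : 'I_n, [forall l, (v l : nat) == (l == i) :> nat]]
    | [exists i : 'I_n, [exists j : 'I_n,
         (i <= j)%N && [forall l, (v l : nat) == ((l == i) + (l == j))%N]]]].

Definition C0 n : {set vert n} := [set v | isC0 v].

Definition pairs n : {set {set vert n}} :=
  [set e : {set vert n} | (e \subset C0 n) && (#|e| == 2%N)].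

(* A graph on C^0_n is an edge set E \subset pairs n. *)
Definition adj n (E : {set {set vert n}}) : rel (vert n) :=
  fun x y => [set x; y] \in E.

(* complexes of the associated reaction network: vertices of positive degree *)
Definition complexes n (E : {set {set vert n}}) : {set vert n} :=
  [set x | [exists y, adj E x y]].

Definition comp n (E : {set {set vert n}}) (x : vert n) : {set vert n} :=
  [set y | connect (adj E) x y].

Definition components n (E : {set {set vert n}}) : {set {set vert n}} :=
  [set comp E x | x in complexes E].

Definition paired n (E : {set {set vert n}}) : bool :=
  [forall C in components E, #|C| == 2%N].

Definition ipaired n (i : nat) (E : {set {set vert n}}) : bool :=
  paired E && (#|components E| == i).

Definition eventA n (E : {set {set vert n}}) : bool :=
  [forall e in E, forall y in e, forall y' in e,
     (y != y') ==> (#|[set i | y i != y' i]| == 4%N)].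

Local Open Scope ring_scope.

Definition erw (R : realFieldType) n (p : R) (E : {set {set vert n}}) : R :=
  p ^+ #|E| * (1 - p) ^+ (#|pairs n| - #|E|).

Definition ERprob (R : realFieldType) n (p : R) (A : pred {set {set vert n}}) : R :=
  \sum_(E in powerset (pairs n) | A E) erw p E.

Definition ERcond (R : realFieldType) n (p : R)
    (A B : pred {set {set vert n}}) : R :=
  ERprob p (fun E => A E && B E) / ERprob p B.

(* Main.v *)
Require Import Defs.
From HB Require Import structures.
From mathcomp Require Import all_boot all_order all_algebra.
Import Order.TTheory GRing.Theory Num.Theory.
From mathcomp Require Import all_fingroup.
From mathcomp Require Import zify ring lra.
Import Order.TTheory GRing.Theory Num.Theory.
Set Implicit Arguments. Unset Strict Implicit. Unset Printing Implicit Defensive.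

Definition matching n (E : {set {set vert n}}) :=
  [forall e in E, forall e' in E, (e != e') ==> [disjoint e & e']].

Lemma two_elim (T : finType) (e : {set T}) x : #|e| = 2 -> x \in e ->
  exists y, y != x /\ e = [set x; y].
Proof.
move=> /eqP /cards2P [a [b [ab ->]]] /set2P [->|->].
  by exists b; rewrite eq_sym ab.
by exists a; rewrite setUC.
Qed.

Lemma adjC n (E : {set {set vert n}}) x y : adj E x y = adj E y x.
Proof. by rewrite /adj setUC. Qed.

Lemma pairs_card n e : e \in pairs n -> #|e| = 2.
Proof. by rewrite inE => /andP [_ /eqP]. Qed.

Lemma matchingP n (E : {set {set vert n}}) e e' x :
  matching E -> e \in E -> e' \in E -> x \in e -> x \in e' -> e = e'.
Proof.
move=> /forall_inP /(_ e) M eE e'E xe xe'.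
have /forall_inP /(_ e' e'E) := M eE.
case: eqP => // _ /= /disjoint_setI0 /setP /(_ x).
by rewrite !inE xe xe'.
Qed.

Lemma comp_edge n (E : {set {set vert n}}) e x :
  E \subset pairs n -> matching E -> e \in E -> x \in e -> Defs.comp E x = e.
Proof.
move=> sE M eE xe; apply/setP => y; rewrite inE.
apply/idP/idP.
  move=> cxy.
  have cl : closed (adj E) e.
    move=> u v; rewrite /adj => uvE.
    have uf : u \in [set u; v] by rewrite !inE eqxx.
    have vf : v \in [set u; v] by rewrite !inE eqxx orbT.
    case ue: (u \in e); case ve: (v \in e) => //.
      by move: ve; rewrite (matchingP M eE uvE ue uf) vf.
    by move: ue; rewrite (matchingP M eE uvE ve vf) uf.
  by rewrite -(closed_connect cl cxy).
move=> ye.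
have [z [zx ez]] := two_elim (pairs_card (subsetP sE _ eE)) xe.
move: ye; rewrite ez => /set2P [->|->]; first exact: connect0.
by apply: connect1; rewrite /adj -ez.
Qed.

Lemma complexesP n (E : {set {set vert n}}) x : E \subset pairs n ->
  reflect (exists2 e, e \in E & x \in e) (x \in complexes E).
Proof.
move=> sE; rewrite inE; apply: (iffP existsP).
  by move=> [y xy]; exists [set x; y] => //; rewrite !inE eqxx.
move=> [e eE xe].
have [z [zx ez]] := two_elim (pairs_card (subsetP sE _ eE)) xe.
by exists z; rewrite /adj -ez.
Qed.

Lemma components_matching n (E : {set {set vert n}}) :
  E \subset pairs n -> matching E -> components E = E.
Proof.
move=> sE M; apply/setP => C; apply/imsetP/idP.
  move=> [x /(complexesP _ sE) [e eE xe] ->].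
  by rewrite (comp_edge sE M eE xe).
move=> CE.
have /eqP /cards2P [a [b [ab eC]]] := pairs_card (subsetP sE _ CE).
have aC : a \in C by rewrite eC !inE eqxx.
exists a; first by apply/(complexesP _ sE); exists C.
by rewrite (comp_edge sE M CE aC).
Qed.

Lemma ipaired_char n k (E : {set {set vert n}}) : E \subset pairs n ->
  ipaired k E = matching E && (#|E| == k).
Proof.
move=> sE; apply/idP/idP; last first.
  move=> /andP [M kE]; rewrite /ipaired /paired components_matching //.
  rewrite kE andbT; apply/forall_inP => C CE.
  by rewrite pairs_card // (subsetP sE).
move=> /andP [P kE].
have M : matching E.
  apply/forall_inP => e eE; apply/forall_inP => e' e'E; apply/implyP => ne.
  rewrite -setI_eq0; apply/negPn/negP => /set0Pn [x]; rewrite inE => /andP [xe xe'].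
  have [y [yx ey]] := two_elim (pairs_card (subsetP sE _ eE)) xe.
  have [z [zx ez]] := two_elim (pairs_card (subsetP sE _ e'E)) xe'.
  have yz : y != z by apply: contra ne => /eqP yz; rewrite ey ez yz.
  have xc : x \in complexes E by apply/(complexesP _ sE); exists e.
  have : Defs.comp E x \in components E by apply/imsetP; exists x.
  move/forall_inP: P => P /P /eqP c2.
  have cx : forall w, w \in [set x; y; z] -> w \in Defs.comp E x.
    move=> w; rewrite !inE => /orP [/orP [] |] /eqP ->.
    - exact: connect0.
    - by apply: connect1; rewrite /adj -ey.
    - by apply: connect1; rewrite /adj -ez.
  have pr : [set x; y] \proper Defs.comp E x.
    apply/properP; split.
      by apply/subsetP => w ww; apply: cx; rewrite !inE; rewrite !inE in ww; rewrite ww.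
    exists z; first by apply: cx; rewrite !inE eqxx !orbT.
    by rewrite !inE negb_or zx eq_sym yz.
  have := proper_card pr; rewrite c2 cards2 eq_sym yx.
  by [].
rewrite M /=; move: kE; rewrite components_matching //.
Qed.

Definition Mset n k : {set {set {set vert n}}} :=
  [set E in powerset (pairs n) | ipaired k E].
Definition fcount n k (e : {set vert n}) := #|[set E in Mset n k | e \in E]|.

Definition pC0 n (s : {perm vert n}) := forall x, (s x \in C0 n) = (x \in C0 n).

Lemma pairs_img n (s : {perm vert n}) e : pC0 s -> e \in pairs n -> s @: e \in pairs n.
Proof.
move=> hs; rewrite !inE => /andP [sub c2]; rewrite card_imset ?c2 ?andbT; last exact: perm_inj.
by apply/subsetP => y /imsetP [x xe ->]; rewrite hs (subsetP sub).
Qed.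

Lemma Mset_img n k (s : {perm vert n}) E : pC0 s -> E \in Mset n k ->
  [set s @: e | e : {set vert n} in E] \in Mset n k.
Proof.
move=> hs; rewrite !inE => /andP [sE].
have sE' : [set s @: e | e : {set vert n} in E] \subset pairs n.
  by apply/subsetP => f /imsetP [e eE ->]; apply: pairs_img => //; apply: (subsetP sE).
rewrite sE' /= !ipaired_char // => /andP [M kE].
rewrite card_imset; last exact: imset_inj (@perm_inj _ s).
rewrite kE andbT.
apply/forall_inP => f /imsetP [e1 e1E ->]; apply/forall_inP => f' /imsetP [e2 e2E ->].
apply/implyP => ne.
have ne12 : e1 != e2 by apply: contra ne => /eqP ->.
have := forall_inP M _ e1E => /forall_inP /(_ _ e2E) /implyP /(_ ne12).
rewrite -!setI_eq0 -imsetI; last by move=> x y _ _; exact: perm_inj.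
by move=> /eqP ->; rewrite imset0.
Qed.

Lemma fcount_le n k (s : {perm vert n}) e : pC0 s -> fcount k e <= fcount k (s @: e).
Proof.
move=> hs; rewrite /fcount.
rewrite -(card_imset _ (imset_inj (imset_inj (@perm_inj _ s)))).
apply: subset_leq_card; apply/subsetP => F /imsetP [E]; rewrite inE => /andP [EM eE] ->.
rewrite inE Mset_img //=.
by apply/imsetP; exists e.
Qed.

Lemma tperm_C0 n (a b : vert n) x : a \in C0 n -> b \in C0 n ->
  (tperm a b x \in C0 n) = (x \in C0 n).
Proof.
move=> ha hb; case: tpermP => [->|->|//]; first by rewrite ha hb.
by rewrite ha hb.
Qed.

Lemma move_pair n (e e' : {set vert n}) : e \in pairs n -> e' \in pairs n ->
  exists2 s : {perm vert n}, pC0 s & s @: e = e'.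
Proof.
rewrite !inE => /andP [se /cards2P [a [b [ab ee]]]] /andP [se' /cards2P [c [d [cd ee']]]].
have aC : a \in C0 n by rewrite (subsetP se) // ee !inE eqxx.
have bC : b \in C0 n by rewrite (subsetP se) // ee !inE eqxx orbT.
have cC : c \in C0 n by rewrite (subsetP se') // ee' !inE eqxx.
have dC : d \in C0 n by rewrite (subsetP se') // ee' !inE eqxx orbT.
set t1 := tperm a c.
set b' := t1 b.
have b'C : b' \in C0 n by rewrite tperm_C0.
set t2 := tperm b' d.
exists (t1 * t2)%g.
  by move=> x; rewrite permM !tperm_C0.
rewrite ee imsetU1 imset_set1 !permM ee'.
have -> : t1 a = c by rewrite /t1 tpermL.
have cb' : c != b'.
  by rewrite /b' -{1}(tpermL a c) (inj_eq (@perm_inj _ t1)).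
have -> : t2 c = c by rewrite /t2 tpermD // eq_sym.
by rewrite /t2 tpermL.
Qed.

Lemma fcount_const n k e e' : e \in pairs n -> e' \in pairs n -> fcount k e = fcount k e'.
Proof.
move=> he he'; apply/eqP; rewrite eqn_leq.
have [s hs se] := move_pair he he'.
have [t ht et] := move_pair he' he.
apply/andP; split; first by rewrite -se; apply: fcount_le.
by rewrite -{1}et; apply: fcount_le.
Qed.

Definition good n (e : {set vert n}) :=
  [forall y in e, forall y' in e, (y != y') ==> (#|[set i | y i != y' i]| == 4)].
Definition Bad n := [set e in pairs n | ~~ good e].

Lemma card_as_sum (T : finType) (A S : {set T}) :
  #|A :&: S| = \sum_(e in S) (e \in A : nat).
Proof.
rewrite -sum1_card big_mkcond [RHS]big_mkcond /=; apply: eq_bigr => e _.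
by rewrite !inE; case: (e \in A); case: (e \in S).
Qed.

Lemma double n (M : {set {set {set vert n}}}) (S : {set {set vert n}}) :
  \sum_(E in M) #|E :&: S| = \sum_(e in S) #|[set E in M | e \in E]|.
Proof.
under eq_bigr => E _ do rewrite card_as_sum.
rewrite exchange_big /=; apply: eq_bigr => e _.
rewrite -sum1_card [RHS]big_mkcond [LHS]big_mkcond /=; apply: eq_bigr => E _.
by rewrite !inE; case: (E \in M); case: (e \in E).
Qed.

Lemma Mset_sub n k E : E \in Mset n k -> E \subset pairs n.
Proof. by rewrite !inE => /andP [? _]. Qed.

Lemma Mset_card n k E : E \in Mset n k -> #|E| = k.
Proof.
move=> EM; have := EM; rewrite !inE => /andP [_].
by rewrite ipaired_char ?(Mset_sub EM) // => /andP [_ /eqP].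
Qed.

Lemma count_bad n k :
  #|[set E in Mset n k | ~~ eventA E]| * #|pairs n| <= #|Bad n| * (k * #|Mset n k|).
Proof.
set M := Mset n k.
have step1 : #|[set E in M | ~~ eventA E]| <= \sum_(E in M) #|E :&: Bad n|.
  rewrite -sum1_card.
  apply: (@leq_trans (\sum_(E in M | ~~ eventA E) #|E :&: Bad n|)).
    rewrite (eq_bigl (fun E => (E \in M) && ~~ eventA E)); last by move=> E; rewrite inE.
    apply: leq_sum => E /andP [EM nA]; rewrite card_gt0.
    have [e eE ng] : exists2 e, e \in E & ~~ good e.
      move: nA; rewrite /eventA negb_forall_in => /exists_inP [e eE ng].
      by exists e.
    apply/set0Pn; exists e; rewrite !inE eE ng andbT /=.
    by have := subsetP (Mset_sub EM) e eE; rewrite inE.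
  by rewrite [X in (_ <= X)%N](bigID (fun E => ~~ eventA E)) /= leq_addr.
apply: (leq_trans (leq_mul step1 (leqnn _))).
rewrite double big_distrl /=.
have sumP : \sum_(e in pairs n) fcount k e = k * #|M|.
  rewrite /fcount -double.
  under eq_bigr => E EM.
    have -> : E :&: pairs n = E by apply/setIidPl; exact: Mset_sub EM.
    rewrite (Mset_card EM).
  over.
  by rewrite sum_nat_const mulnC.
rewrite -sumP -sum_nat_const.
apply: leq_sum => e eB.
have eP : e \in pairs n by move: eB; rewrite inE => /andP [].
rewrite mulnC -sum_nat_const leq_eqVlt; apply/orP; left; apply/eqP.
apply: eq_bigr => e' e'P.
by apply: fcount_const.
Qed.

Definition o0 : 'I_3 := @Ordinal 3 0 isT.
Definition o1 : 'I_3 := @Ordinal 3 1 isT.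
Definition o2 : 'I_3 := @Ordinal 3 2 isT.

Definition zero n : vert n := [ffun _ => o0].
Definition e1 n (i : 'I_n) : vert n := [ffun l => if l == i then o1 else o0].
Definition e2 n (i : 'I_n) : vert n := [ffun l => if l == i then o2 else o0].
Definition ind n (A : {set 'I_n}) : vert n := [ffun l => if l \in A then o1 else o0].
Definition twoS n : {set {set 'I_n}} := [set A : {set 'I_n} | #|A| == 2].
Definition Gen n : {set vert n} := [set ind A | A in twoS n].
Definition NonGen n : {set vert n} := C0 n :\: Gen n.

Lemma ind_inj n : injective (@ind n).
Proof.
move=> A B /ffunP h; apply/setP => l; have := h l; rewrite !ffunE.
by case: (l \in A); case: (l \in B).
Qed.

Lemma ind_C0 n (a b : 'I_n) : a != b -> ind [set a; b] \in C0 n.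
Proof.
wlog ab : a b / (a <= b)%N.
  move=> W nab; case: (leqP a b) => h; first exact: W.
  by rewrite setUC W // 1?eq_sym // ltnW.
move=> nab; rewrite inE /isC0; apply/or3P; apply: Or33.
apply/existsP; exists a; apply/existsP; exists b; rewrite ab /=.
apply/forallP => l; rewrite ffunE !inE.
case: (l =P a) => [la|la]; case: (l =P b) => [lb|lb] //=.
  by move: nab; rewrite -la -lb eqxx.
Qed.

Lemma Gen_C0 n : Gen n \subset C0 n.
Proof.
apply/subsetP => x /imsetP [A]; rewrite inE => /cards2P [a [b [ab ->]]] ->.
exact: ind_C0.
Qed.

Lemma card_Gen n : #|Gen n| = 'C(n, 2).
Proof. by rewrite card_imset; [rewrite /twoS card_draws card_ord | exact: ind_inj]. Qed.

Lemma C0_lb n : ('C(n, 2) <= #|C0 n|)%N.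
Proof. by rewrite -card_Gen subset_leq_card // Gen_C0. Qed.

Lemma NonGen_sub n : NonGen n \subset
  (zero n |: [set e1 i | i : 'I_n]) :|: [set e2 i | i : 'I_n].
Proof.
apply/subsetP => x; rewrite !inE => /andP [nG /or3P [h|h|h]].
- rewrite (_ : x = zero n) ?eqxx //; apply/ffunP => l; apply: val_inj.
  by rewrite ffunE /=; apply/eqP; move/forallP: h; apply.
- move/existsP: h => [i /forallP h].
  apply/orP; left; apply/orP; right; apply/imsetP; exists i => //.
  apply/ffunP => l; apply/eqP; rewrite -val_eqE /= ffunE (eqP (h l)).
  by case: (l == i).
- move/existsP: h => [i /existsP [j /andP [ij /forallP h]]].
  case: (i =P j) => [eij|nij].
    apply/orP; right; apply/imsetP; exists i => //.
    apply/ffunP => l; apply/eqP; rewrite -val_eqE /= ffunE (eqP (h l)).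
    by rewrite -eij; case: (l == i).
  exfalso; move: nG => /negP; apply; apply/imsetP; exists [set i; j].
    by rewrite inE cards2; case: (i =P j).
  apply/ffunP => l; apply/eqP; rewrite -val_eqE /= ffunE (eqP (h l)).
  rewrite !inE; case: (l =P i) => [->|li]; case: (l =P j) => [lj|lj] //=.
  all: by rewrite ?(introF eqP nij) ?(introF eqP (nesym nij)).
Qed.

Lemma card_NonGen n : (#|NonGen n| <= 2 * n + 1)%N.
Proof.
apply: (leq_trans (subset_leq_card (NonGen_sub n))).
apply: (leq_trans (leq_card_setU _ _)).
rewrite cardsU1.
have h1 : #|[set e1 i | i : 'I_n]| <= n by apply: leq_trans (leq_imset_card _ _) _; rewrite card_ord.
have h2 : #|[set e2 i | i : 'I_n]| <= n by apply: leq_trans (leq_imset_card _ _) _; rewrite card_ord.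
apply: leq_trans (leq_add (leq_add (leq_b1 _) h1) h2) _; lia.
Qed.

Lemma diff_ind n (A B : {set 'I_n}) : #|A| = 2 -> #|B| = 2 -> [disjoint A & B] ->
  #|[set i | ind A i != ind B i]| = 4.
Proof.
move=> hA hB dAB.
have -> : [set i | ind A i != ind B i] = A :|: B.
  apply/setP => i; rewrite !inE !ffunE.
  have := disjoint_setI0 dAB => /setP /(_ i); rewrite !inE.
  by case: (i \in A); case: (i \in B).
by rewrite cardsU (disjoint_setI0 dAB) cards0 hA hB.
Qed.

Lemma good_disj n (A B : {set 'I_n}) : #|A| = 2 -> #|B| = 2 -> [disjoint A & B] ->
  good [set ind A; ind B].
Proof.
move=> hA hB dAB.
apply/forall_inP => y /set2P [->|->]; apply/forall_inP => y' /set2P [->|->];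
  rewrite ?eqxx //=; apply/implyP => _; apply/eqP; apply: diff_ind => //.
by rewrite disjoint_sym.
Qed.

Definition X1 n : {set {set vert n}} :=
  [set [set p.1; p.2] | p in setX (NonGen n) (C0 n)].
Definition X2 n : {set {set vert n}} :=
  [set [set ind [set t.1.1; t.1.2]; ind [set t.1.1; t.2]] | t : ('I_n * 'I_n * 'I_n)%type].

Lemma bad_sub n : Bad n \subset X1 n :|: X2 n.
Proof.
apply/subsetP => e; rewrite !inE => /andP [/andP [sC /cards2P [x [y [xy ee]]]] ng].
have xC : x \in C0 n by rewrite (subsetP sC) // ee !inE eqxx.
have yC : y \in C0 n by rewrite (subsetP sC) // ee !inE eqxx orbT.
case xG: (x \in Gen n); last first.
  apply/orP; left; apply/imsetP; exists (x, y) => //.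
  by rewrite in_setX in_setD xG xC yC.
case yG: (y \in Gen n); last first.
  apply/orP; left; apply/imsetP; exists (y, x); first by rewrite in_setX in_setD yG xC yC.
  by rewrite ee setUC.
have [A hA xA] := imsetP xG.
have [B hB yB] := imsetP yG.
move: hA hB; rewrite !inE => /eqP hA /eqP hB.
rewrite ee xA yB in ng *; move: ng.
case dAB: [disjoint A & B].
  by move: (good_disj hA hB dAB) => ->.
move=> _.
move: dAB; rewrite -setI_eq0 => /set0Pn [a]; rewrite inE => /andP [aA aB].
have [b [_ eA]] := two_elim hA aA.
have [c [_ eB]] := two_elim hB aB.
apply/orP; right; apply/imsetP; exists (a, b, c) => //.
by rewrite -eA -eB.
Qed.

Lemma bad_bound n : (#|Bad n| <= (2 * n + 1) * #|C0 n| + n * n * n)%N.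
Proof.
apply: (leq_trans (subset_leq_card (bad_sub n))).
apply: (leq_trans (leq_card_setU _ _)).
apply: leq_add.
  apply: (leq_trans (leq_imset_card _ _)).
  by rewrite cardsX leq_mul2r card_NonGen orbT.
apply: (leq_trans (leq_imset_card _ _)).
by rewrite !card_prod !card_ord.
Qed.

Lemma arith n c B Q : (20 <= n -> n * n <= 2 * c + n -> Q * 2 + c = c * c ->
  B <= (2*n+1)*c + n*n*n -> B * n <= 21 * Q)%N.
Proof.
move=> hn hc hQ hB.
have h1 : B * n <= ((2*n+1)*c + n*n*n) * n by rewrite leq_mul2r hB orbT.
apply: leq_trans h1 _.
set m := n * n in hc *.
have hm : 20 * n <= m by rewrite /m leq_mul2r hn orbT.
have ha : 19 * m <= 40 * c by lia.
have hb : 19 * n <= 2 * c by lia.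
have hc1 : 190 <= c by lia.
have p1 : (19 * m) * c <= (40 * c) * c by rewrite leq_mul2r ha orbT.
have p2 : (19 * m) * m <= (40 * c) * m by rewrite leq_mul2r ha orbT.
have p3 : (19 * n) * c <= (2 * c) * c by rewrite leq_mul2r hb orbT.
have p4 : 190 * c <= c * c by rewrite leq_mul2r hc1 orbT.
have e1 : ((2*n+1)*c + n*n*n) * n = 2 * (m * c) + n * c + m * m.
  rewrite /m; ring.
rewrite e1.
have e2 : m * c = c * m by rewrite mulnC.
lia.
Qed.

Lemma sq_pred m : (m * m = m * m.-1 + m)%N.
Proof. by case: m => // k; rewrite /= mulnS addnC. Qed.

Lemma bad_ratio n : (20 <= n)%N -> (#|Bad n| * n <= 21 * #|pairs n|)%N.
Proof.
move=> hn; apply: arith hn _ _ (bad_bound n).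
  have := C0_lb n; have h : ('C(n,2) * 2 = n * n.-1)%N by rewrite bin_ffact ffactnS ffactn1.
  rewrite sq_pred; lia.
by rewrite /pairs cards_draws bin_ffact ffactnS ffactn1 [in RHS]sq_pred.
Qed.

Definition pairE n (i : 'I_n) : {set vert n} := [set e1 i; e2 i].

Lemma pairE_at n (a b : 'I_n) z : z \in pairE b -> z a != o0 -> a = b.
Proof.
rewrite !inE => /orP [] /eqP -> ; rewrite ffunE;
  by case: (a =P b) => // _; rewrite eqxx.
Qed.

Lemma pairE_self n (a : 'I_n) : e1 a \in pairE a /\ e1 a a != o0.
Proof. by rewrite !inE eqxx ffunE eqxx. Qed.

Lemma pairE_nz n (a : 'I_n) z : z \in pairE a -> z a != o0.
Proof. by rewrite !inE => /orP [] /eqP ->; rewrite ffunE eqxx. Qed.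

Lemma pairE_pairs n (a : 'I_n) : pairE a \in pairs n.
Proof.
rewrite inE; apply/andP; split.
  apply/subsetP => z; rewrite !inE => /orP [] /eqP ->; apply/or3P.
    apply: Or32; apply/existsP; exists a; apply/forallP => l; rewrite ffunE.
    by case: (l == a).
  apply: Or33; apply/existsP; exists a; apply/existsP; exists a; rewrite leqnn /=.
  apply/forallP => l; rewrite ffunE.
  by case: (l == a).
rewrite cards2; case: (e1 a =P e2 a) => [h|//]; have := congr1 (fun f : vert n => f a) h.
by rewrite !ffunE eqxx.
Qed.

Lemma Mset_nonempty n k : (k <= n)%N -> (0 < #|Mset n k|)%N.
Proof.
move=> hk.
set E0 := [set pairE (widen_ord hk j) | j : 'I_k].
have inj : injective (fun j => pairE (widen_ord hk j)).
  move=> a b /= h; apply: val_inj; apply: (congr1 val (_ : widen_ord hk a = widen_ord hk b)).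
  have [h1 h2] := pairE_self (widen_ord hk a).
  by apply: pairE_at h2; rewrite -h.
have sE : E0 \subset pairs n.
  by apply/subsetP => f /imsetP [j _ ->]; apply: pairE_pairs.
have M : matching E0.
  apply/forall_inP => f /imsetP [a _ ->]; apply/forall_inP => f' /imsetP [b _ ->].
  apply/implyP => ne; rewrite -setI_eq0; apply/eqP/setP => z; rewrite [in RHS]inE in_setI.
  apply/negP => /andP [za zb].
  have := pairE_at zb (pairE_nz za) => eab.
  by move: ne; rewrite eab eqxx.
apply/card_gt0P; exists E0; rewrite inE.
rewrite powersetE sE /= ipaired_char // M /= card_imset //.
by rewrite card_ord.
Qed.

Unset Implicit Arguments.
Local Open Scope ring_scope.

Lemma ERprob_const (R : realFieldType) n k (p : R) (A : pred {set {set vert n}}) :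
  (forall E, A E -> ipaired k E) ->
  ERprob p A = (p ^+ k * (1 - p) ^+ (#|pairs n| - k)) *+ #|[set E in powerset (pairs n) | A E]|.
Proof.
move=> hA; rewrite /ERprob -sumr_const.
apply: eq_big => [E|E]; first by rewrite inE.
move=> /andP [hP hAE]; rewrite /erw.
have sE : E \subset pairs n by rewrite powersetE in hP.
by move: (hA E hAE); rewrite ipaired_char // => /andP [_ /eqP ->].
Qed.

Theorem mainTheorem8 (R : realFieldType) (k : nat -> nat) (p : nat -> R)
  (hkpos : forall n, (0 < k n)%N)
  (hklim : forall eps : R, 0 < eps ->
     exists N : nat, forall n, (N <= n)%N -> (k n)%:R / n%:R < eps)
  (hp : forall n, 0 < p n < 1) :
  exists N : nat, forall n : nat, (N <= n)%N ->
    1 - 21%:R * (k n)%:R / n%:R <=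
      ERcond (p n) (@eventA n) (@ipaired n (k n)).
Proof.
have [N1 hN1] := hklim 1 ltr01.
exists (maxn N1 20) => n; rewrite geq_max => /andP [hn1 hn20].
set kn := k n.
have npos : (0 < n)%N by apply: leq_trans hn20.
have hkn : (kn <= n)%N.
  have := hN1 n hn1; rewrite ltr_pdivrMr ?ltr0n // mul1r ltr_nat => /ltnW.
  by [].
set M := Mset n kn.
set m := #|M|.
have m0 : (0 < m)%N := Mset_nonempty hkn.
set d := #|[set E in M | ~~ eventA E]|.
set a := #|[set E in M | eventA E]|.
have ad : (a + d)%N = m.
  rewrite /m -(cardsID [set E | eventA E] M) /a /d.
  have -> : [set E in M | eventA E] = M :&: [set E | eventA E] by apply/setP => E; rewrite !inE.
  have -> : [set E in M | ~~ eventA E] = M :\: [set E | eventA E] by apply/setP => E; rewrite !inE andbC.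
  by [].
set P := #|pairs n|.
have P0 : (0 < P)%N by apply/card_gt0P; exists (pairE (Ordinal npos)); apply: pairE_pairs.
have nat_ineq : (d * n <= 21 * (kn * m))%N.
  have cb := count_bad n kn.
  have br := bad_ratio hn20.
  have h1 := leq_mul cb (leqnn n).
  have h2 := leq_mul br (leqnn (kn * m)).
  rewrite -(leq_pmul2l P0).
  have e1 : (P * (d * n) = d * P * n)%N by ring.
  have e3 : (P * (21 * (kn * m)) = 21 * P * (kn * m))%N by ring.
  rewrite e1 e3; apply: leq_trans h1 _.
  have e2 : (#|Bad n| * (kn * m) * n = #|Bad n| * n * (kn * m))%N by ring.
  by rewrite e2.
have [p0 p1] := andP (hp n).
set w := p n ^+ kn * (1 - p n) ^+ (P - kn).
have w0 : 0 < w by rewrite mulr_gt0 // exprn_gt0 // subr_gt0.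
have ERB : ERprob (p n) (@ipaired n kn) = w *+ m by rewrite (@ERprob_const R n kn (p n) (@ipaired n kn) (fun E h => h)).
have ERA : ERprob (p n) (fun E : {set {set vert n}} => eventA E && ipaired kn E) = w *+ a.
  rewrite (@ERprob_const R n kn); last by move=> E /andP [].
  congr (_ *+ _); rewrite /a; apply: eq_card => E; rewrite !inE.
  by rewrite -andbA; congr (_ && _); exact: andbC.
have E1 : ERcond (p n) (@eventA n) (@ipaired n kn) = (w *+ a) / (w *+ m).
  rewrite -ERA -ERB /ERcond; reflexivity.
rewrite E1 -[w *+ a]mulr_natr -[w *+ m]mulr_natr.
rewrite ler_pdivlMr; last by rewrite mulr_gt0 // ltr0n.
rewrite mulrCA ler_pM2l //.
have key : d%:R * n%:R <= 21%:R * kn%:R * (a + d)%:R :> R.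
  by rewrite -!natrM ler_nat ad -mulnA.
have key2 : d%:R <= 21%:R * kn%:R * (a + d)%:R / n%:R :> R.
  by rewrite ler_pdivlMr ?ltr0n.
have eq : (1 - 21%:R * kn%:R / n%:R) * (a + d)%:R =
    (a + d)%:R - 21%:R * kn%:R * (a + d)%:R / n%:R :> R.
  by rewrite mulrBl mul1r mulrAC.
rewrite -ad eq; move: key2; rewrite natrD.
set X := (X in _ <= X -> _).
move=> k2; rewrite -/X; lra.
Qed.
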